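(* Let $z\in L_T$ and suppose that \[h_T(z)=\sum_{j=1}^n q\frac{|y_{j-1}-y_j|}{\xi_T(y_j)}\] for distinct points $y_0,\dots,y_n\in L_T$ with $y_0=z$ and $y_n=0$. Then for any $k\in\{1,\dots,n\}$, \[h_T(y_k)=\sum_{j=k+1}^n q\frac{|y_{j-1}-y_j|}{\xi_T(y_j)}.\] Moreover, the sequence $(\xi_T(y_j))_{j\ge1}$ is non-increasing.
   Context: $(\xi(z))_{z\in\mathbb{Z}^d}$ is a positive potential (i.i.d. Pareto with parameter $\alpha>d$, i.e. $\mathbb{P}(\xi(z)>x)=x^{-\alpha}$ for $x\ge1$). $|\cdot|$ is the $\ell_1$-norm. $q=d/(\alpha-d)$, $a(T)=(T/\log T)^q$, $r(T)=(T/\log T)^{q+1}$, $L_T=\{z\in\mathbb{R}^d:r(T)z\in\mathbb{Z}^d\}$, $\xi_T(z)=\xi(r(T)z)/a(T)$. For $z\in L_T$, \[h_T(z)=\inf\Big\{\sum_{j=1}^n q\frac{|y_{j-1}-y_j|}{\xi_T(y_j)}: n\ge0,\ y_0,\dots,y_n\in L_T,\ y_0=z,\ y_n=0\Big\}.\] *)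

(* Defs.v *)
From HB Require Import structures.
From mathcomp Require Import all_boot all_order all_algebra.
From mathcomp Require Import all_classical all_reals all_analysis.
Set Implicit Arguments. Unset Strict Implicit. Unset Printing Implicit Defensive.
Import Order.TTheory GRing.Theory Num.Theory.
Local Open Scope classical_set_scope.
Local Open Scope ring_scope.

Definition qexp (R : realType) (d : nat) (alpha : R) : R := d%:R / (alpha - d%:R).

Definition aT (R : realType) (d : nat) (alpha T : R) : R :=
  (T / ln T) `^ (qexp d alpha).
Definition rT (R : realType) (d : nat) (alpha T : R) : R :=
  (T / ln T) `^ (qexp d alpha + 1).

Definition l1 (R : realType) (d : nat) (x : 'rV[R]_d) : R :=
  \sum_(i < d) `|x ord0 i|.

Definition inLT (R : realType) (d : nat) (alpha T : R) (z : 'rV[R]_d) : Prop :=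
  forall i : 'I_d, rT d alpha T * z ord0 i \is a Num.int.

(* xi_T(z) = xi(r(T) z) / a(T); for z in L_T, r(T) z is an integer vector,
   recovered exactly by the coordinatewise floor. *)
Definition xiT (R : realType) (d : nat) (alpha T : R) (xi : 'rV[int]_d -> R)
  (z : 'rV[R]_d) : R :=
  xi (\row_i Num.floor (rT d alpha T * z ord0 i)) / aT d alpha T.

(* cost of the path y0 = z, y1, ..., yn (ys = [:: y1; ...; yn]):
   sum_{j=1}^n q |y_{j-1} - y_j| / xi_T(y_j) *)
Fixpoint pcost (R : realType) (d : nat) (alpha T : R) (xi : 'rV[int]_d -> R)
  (z : 'rV[R]_d) (ys : seq 'rV[R]_d) : R :=
  match ys with
  | [::] => 0
  | y :: ys' => qexp d alpha * l1 (z - y) / xiT alpha T xi y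
                + pcost alpha T xi y ys'
  end.

Definition admissible (R : realType) (d : nat) (alpha T : R)
  (z : 'rV[R]_d) (ys : seq 'rV[R]_d) : Prop :=
  (forall y, y \in z :: ys -> inLT alpha T y) /\ last z ys = 0.

Definition hT (R : realType) (d : nat) (alpha T : R) (xi : 'rV[int]_d -> R)
  (z : 'rV[R]_d) : R :=
  inf [set s : R | exists ys, admissible alpha T z ys /\ s = pcost alpha T xi z ys].

(* Main.v *)
Require Import Defs.
From HB Require Import structures.
From mathcomp Require Import all_boot all_order all_algebra.
From mathcomp Require Import all_classical all_reals all_analysis.
From mathcomp Require Import lra.
Set Implicit Arguments. Unset Strict Implicit.
Import Order.TTheory GRing.Theory Num.Theory.
Local Open Scope ring_scope.

Section H.
Variables (R : realType) (d : nat) (alpha T : R) (xi : 'rV[int]_d -> R).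
Hypothesis hxi : forall x, 0 < xi x.
Hypothesis halpha : d%:R < alpha.
Hypothesis hT1 : 1 < T.

Lemma pcost_cat z s1 s2 : pcost alpha T xi z (s1 ++ s2) =
  pcost alpha T xi z s1 + pcost alpha T xi (last z s1) s2.
Proof.
elim: s1 z => [|y s IH] z /=; first by rewrite add0r.
by rewrite IH addrA.
Qed.

Lemma aT_gt0 : 0 < aT d alpha T.
Proof. apply: powR_gt0; apply: divr_gt0; [exact: lt_trans ltr01 hT1 | exact: ln_gt0]. Qed.

Lemma xiT_gt0 y : 0 < xiT alpha T xi y.
Proof. exact: divr_gt0 (hxi _) aT_gt0. Qed.

Lemma qexp_ge0 : 0 <= qexp d alpha.
Proof. apply: divr_ge0 => //; rewrite subr_ge0 ltW //. Qed.

Lemma l1_ge0 (x : 'rV[R]_d) : 0 <= l1 x.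
Proof. by apply: sumr_ge0 => i _. Qed.

Lemma l1_triangle (x y : 'rV[R]_d) : l1 (x + y) <= l1 x + l1 y.
Proof.
rewrite /l1 -big_split /=; apply: ler_sum => i _; rewrite mxE; exact: ler_normD.
Qed.

Lemma l1_gt0 (x : 'rV[R]_d) : x != 0 -> 0 < l1 x.
Proof.
move=> hx; rewrite lt_def l1_ge0 andbT; apply/eqP => h.
move/eqP: hx; apply; apply/matrixP => i j; rewrite (ord1 i) mxE.
have /psumr_eq0P H : \sum_(i < d) `|x ord0 i| = 0 by exact: h.
by apply/normr0_eq0; apply: H.
Qed.

Lemma pcost_ge0 z s : 0 <= pcost alpha T xi z s.
Proof.
elim: s z => [|y s IH] z //=; apply: addr_ge0 => //.
apply: divr_ge0; [exact: mulr_ge0 qexp_ge0 (l1_ge0 _) | exact: ltW (xiT_gt0 _)].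
Qed.

Lemma hT_le z s : admissible alpha T z s -> hT alpha T xi z <= pcost alpha T xi z s.
Proof.
move=> ad; apply: (ge_inf); last by exists s.
by exists 0 => _ [t [_ ->]]; exact: pcost_ge0.
Qed.

Lemma hT_ge z s : admissible alpha T z s ->
  (forall t, admissible alpha T z t -> pcost alpha T xi z s <= pcost alpha T xi z t) ->
  pcost alpha T xi z s <= hT alpha T xi z.
Proof.
move=> ad H; apply: lb_le_inf; first by exists (pcost alpha T xi z s), s.
by move=> _ [t [adt ->]]; exact: H.
Qed.

End H.

Lemma l1_gt0_d (R : realType) (d : nat) (x : 'rV[R]_d) : 0 < l1 x -> (0 < d)%N.
Proof. by case: d x => // x; rewrite /l1 big_ord0 ltxx. Qed.


Theorem lemma3p3 (R : realType) (d : nat) (alpha T : R)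
  (xi : 'rV[int]_d -> R)
  (hxi : forall x, 0 < xi x)
  (halpha : d%:R < alpha) (hT1 : 1 < T)
  (z : 'rV[R]_d) (ys : seq 'rV[R]_d)
  (hz : inLT alpha T z)
  (hys : forall y, y \in ys -> inLT alpha T y)
  (hlast : last z ys = 0)
  (huniq : uniq (z :: ys))
  (hopt : hT alpha T xi z = pcost alpha T xi z ys) :
  (forall k : nat, (1 <= k <= size ys)%N ->
     hT alpha T xi (nth 0 (z :: ys) k) = pcost alpha T xi (nth 0 (z :: ys) k) (drop k ys))
  /\
  (forall j : nat, (1 <= j)%N -> (j < size ys)%N ->
     xiT alpha T xi (nth 0 (z :: ys) j.+1) <= xiT alpha T xi (nth 0 (z :: ys) j)).
Proof.
have hall : forall y, y \in z :: ys -> inLT alpha T y.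
  by move=> y; rewrite inE => /orP [/eqP -> //| /hys].
split.
  case=> // i /andP [_ hi] /=.
  have Hl : last z (take i.+1 ys) = nth 0 ys i by rewrite (take_nth 0) // last_rcons.
  have Hsplit : ys = take i.+1 ys ++ drop i.+1 ys by rewrite cat_take_drop.
  have hmem : nth 0 ys i \in ys by exact: mem_nth.
  have ad : admissible alpha T (nth 0 ys i) (drop i.+1 ys).
    split.
      move=> y; rewrite inE => /orP [/eqP -> | /mem_drop hy]; first exact: hys.
      exact: hys.
    by rewrite -Hl -last_cat -Hsplit.
  apply/eqP; rewrite eq_le; apply/andP; split; first exact: hT_le.
  apply: hT_ge => // t [adt1 adt2].
  have adz : admissible alpha T z (take i.+1 ys ++ t).
    split; last by rewrite last_cat Hl.
    move=> y; rewrite inE mem_cat => /orP [/eqP -> // | /orP [/mem_take hy | hy]].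
      exact: hys.
    by apply: adt1; rewrite inE hy orbT.
  have := hT_le hxi halpha hT1 adz; rewrite hopt {1}Hsplit !pcost_cat Hl.
  by rewrite lerD2l.
case=> // i _ hi /=.
set p := take i ys.
set a := nth 0 ys i.
set b := nth 0 ys i.+1.
set r := drop i.+2 ys.
have Hys : ys = p ++ a :: b :: r by rewrite /p /a /b /r -(drop_nth 0 hi) -(drop_nth 0 (ltnW hi)) cat_take_drop.
set w := last z p.
have adskip : admissible alpha T z (p ++ b :: r).
  split.
    move=> y; rewrite inE mem_cat => /orP [/eqP -> // | /orP [/mem_take hy | hy]].
      exact: hys.
    by apply: hys; rewrite Hys mem_cat !inE; move: hy; rewrite inE => /orP [->|->];
       rewrite ?orbT.
  by rewrite -hlast Hys !last_cat.
have := hT_le hxi halpha hT1 adskip; rewrite hopt Hys !pcost_cat /= -/w lerD2l.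
rewrite !addrA lerD2r => hle.
rewrite leNgt; apply/negP => hlt.
have hwa : w != a.
  move: huniq; rewrite Hys -cat_cons cat_uniq => /and3P [_ hn _].
  apply/eqP => hw; move: hn; rewrite -hw /w /= mem_last //.
have hpos := l1_gt0 (x := w - a); rewrite subr_eq0 in hpos; have {}hpos := hpos hwa.
have hd : (0 < d)%N.
  exact: l1_gt0_d hpos.
have hq : 0 < qexp d alpha.
  apply: divr_gt0; [by rewrite ltr0n | by rewrite subr_gt0].
have ha : 0 < xiT alpha T xi a by exact: xiT_gt0.
have hb : 0 < xiT alpha T xi b by exact: xiT_gt0.
have htri : l1 (w - b) <= l1 (w - a) + l1 (a - b).
  by have := l1_triangle (w - a) (a - b); rewrite addrA subrK.
have : qexp d alpha * l1 (w - a) / xiT alpha T xi b <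
       qexp d alpha * l1 (w - a) / xiT alpha T xi a.
  rewrite ltr_pM2l; last exact: mulr_gt0.
  by rewrite ltf_pV2 // ?posrE.
move: hle.
have : qexp d alpha * l1 (w - b) / xiT alpha T xi b <=
       qexp d alpha * l1 (w - a) / xiT alpha T xi b + qexp d alpha * l1 (a - b) / xiT alpha T xi b.
  rewrite -mulrDl -mulrDr ler_pM2r ?invr_gt0 // ler_pM2l //.
lra.
Qed.
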